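(* There is an absolute constant $C$ such that the following holds. Let $\alpha$ and $\beta$ be two discrete random variables defined on the same finite probability space. Then there exists a random variable $\gamma$ defined on the same probability space such that $H(\alpha\mid\beta,\gamma)=0$ and $H(\gamma)\le 2H(\alpha\mid\beta)+C$.
   Context: $H$ denotes Shannon entropy (logarithms base $2$) and $H(\cdot\mid\cdot)$ conditional Shannon entropy. The probability space is finite and every non-empty event has positive probability. In the paper the bound is written $H(\gamma)\le 2H(\alpha\mid\beta)+O(1)$, the $O(1)$ being a constant independent of $\alpha,\beta$. *)

(* Defs.v *)
From Stdlib Require Import Reals.
From mathcomp Require Import all_boot all_order all_algebra.
From mathcomp Require Import Rstruct.
Set Implicit Arguments. Unset Strict Implicit. Unset Printing Implicit Defensive.
Import Order.TTheory GRing.Theory Num.Theory.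
Local Open Scope ring_scope.

(* Base-2 logarithm (Stdlib ln; only applied to positive arguments or multiplied by 0). *)
Definition log2 (x : R) : R := (ln x / ln 2)%R.

Definition is_fprob (Omega : finType) (P : Omega -> R) : Prop :=
  (forall w, 0 < P w) /\ \sum_(w : Omega) P w = 1.

Definition rv_vals (Omega : finType) (T : eqType) (X : Omega -> T) : seq T :=
  undup [seq X w | w <- enum Omega].

Definition pr_eq (Omega : finType) (P : Omega -> R) (T : eqType) (X : Omega -> T) (x : T) : R :=
  \sum_(w : Omega | X w == x) P w.

Definition pr_eq2 (Omega : finType) (P : Omega -> R) (T U : eqType)
  (X : Omega -> T) (Y : Omega -> U) (x : T) (y : U) : R :=
  \sum_(w : Omega | (X w == x) && (Y w == y)) P w.

Definition entropy (Omega : finType) (P : Omega -> R) (T : eqType) (X : Omega -> T) : R :=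
  - \sum_(x <- rv_vals X) pr_eq P X x * log2 (pr_eq P X x).

Definition cond_entropy (Omega : finType) (P : Omega -> R) (T U : eqType)
  (X : Omega -> T) (Y : Omega -> U) : R :=
  \sum_(y <- rv_vals Y) pr_eq P Y y *
     (- \sum_(x <- rv_vals X)
          (pr_eq2 P X Y x y / pr_eq P Y y) * log2 (pr_eq2 P X Y x y / pr_eq P Y y)).

Definition rv_pair (Omega : finType) (U V : Type) (Y : Omega -> U) (Z : Omega -> V) :
  Omega -> U * V := fun w => (Y w, Z w).

(* Main.v *)
Require Import Defs.
From Stdlib Require Import Reals Lra.
From mathcomp Require Import all_boot all_order all_algebra.
From mathcomp Require Import Rstruct.
From mathcomp Require Import ring lra.
Set Implicit Arguments. Unset Strict Implicit. Unset Printing Implicit Defensive.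
Import Order.TTheory GRing.Theory Num.Theory.
Local Open Scope ring_scope.

Lemma IZR2 : IZR 2 = 2%:R.
Proof. by rewrite IZRposE INRE. Qed.

Lemma ln2_gt0 : 0 < ln (IZR 2).
Proof. have /RltP h := ln_lt_2. apply: lt_trans h. apply/RltP; apply: Rinv_0_lt_compat; exact: Rlt_0_2. Qed.

Lemma log2_1 : log2 1 = 0.
Proof. rewrite /log2 ln_1 /Rdiv; exact: Rmult_0_l. Qed.

Lemma log2_one : log2 (GRing.one R) = 0.
Proof. by rewrite -R1E log2_1. Qed.

Lemma log2_2 : log2 (IZR 2) = 1.
Proof. rewrite /log2 divff //. by rewrite gt_eqF // ln2_gt0. Qed.

Lemma log2M x y : 0 < x -> 0 < y -> log2 (x * y) = log2 x + log2 y.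
Proof. move=> /RltP hx /RltP hy. by rewrite /log2 ln_mult // -mulrDl. Qed.

Lemma log2V x : 0 < x -> log2 (x^-1) = - log2 x.
Proof. move=> /RltP hx. by rewrite /log2 -RinvE ln_Rinv // mulNr. Qed.

Lemma log2_le x y : 0 < x -> x <= y -> log2 x <= log2 y.
Proof.
move=> hx hxy; rewrite /log2 ler_pM2r ?invr_gt0 ?ln2_gt0 //.
move/RltP: hx => hx; move/RleP: hxy => hxy; apply/RleP.
case: (Rle_lt_or_eq_dec _ _ hxy) => h; last by rewrite h; apply: Rle_refl.
by apply: Rlt_le; apply: ln_increasing.
Qed.

Lemma ln_le_sub1 x : 0 < x -> ln x <= x - 1.
Proof. move=> /RltP hx. have /RleP := exp_ineq1_le (ln x). rewrite exp_ln // RplusE R1E => h. lra. Qed.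

Lemma log2_le_sub1 x : 0 < x -> log2 x <= (x - 1) / ln (IZR 2).
Proof. move=> hx. rewrite /log2 ler_pM2r ?invr_gt0 ?ln2_gt0 //. exact: ln_le_sub1. Qed.

Lemma sum_if_uniq (T : eqType) (s : seq T) (x : T) (c : R) :
  uniq s -> x \in s -> \sum_(y <- s) (if x == y then c else 0) = c.
Proof.
elim: s => // y s IH /= /andP[ys us]; rewrite in_cons big_cons => hx.
have [exy|nxy] := eqVneq x y.
  rewrite big1_seq ?addr0 // => z /andP[_ zs]; case: eqP => // xz.
  by move: ys; rewrite -exy xz zs.
by rewrite IH ?add0r //; move: hx; rewrite (negbTE nxy).
Qed.

Lemma mem_vals (Omega : finType) (T : eqType) (X : Omega -> T) w : X w \in rv_vals X.
Proof. by rewrite mem_undup; apply: map_f; rewrite mem_enum. Qed.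

Lemma vals_ex (Omega : finType) (T : eqType) (X : Omega -> T) x :
  x \in rv_vals X -> exists w, X w = x.
Proof. by rewrite mem_undup => /mapP [w _ ->]; exists w. Qed.

Lemma part_sum (Omega : finType) (T : eqType) (X : Omega -> T) (F : Omega -> R) :
  \sum_(x <- rv_vals X) \sum_(w | X w == x) F w = \sum_w F w.
Proof.
under eq_bigr do rewrite big_mkcond.
rewrite exchange_big /=; apply: eq_bigr => w _.
apply: sum_if_uniq; [exact: undup_uniq | exact: mem_vals].
Qed.

Lemma sum_vals1 (Omega : finType) (P : Omega -> R) (T : eqType) (X : Omega -> T) (f : T -> R) :
  \sum_(x <- rv_vals X) pr_eq P X x * f x = \sum_w P w * f (X w).
Proof.
rewrite -(part_sum X); apply: eq_bigr => x _.
rewrite /pr_eq big_distrl /=; apply: eq_bigr => w /eqP -> //.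
Qed.

Lemma sum_vals2 (Omega : finType) (P : Omega -> R) (T U : eqType) (X : Omega -> T)
  (Y : Omega -> U) (G : T -> U -> R) :
  \sum_(y <- rv_vals Y) \sum_(x <- rv_vals X) pr_eq2 P X Y x y * G x y
  = \sum_w P w * G (X w) (Y w).
Proof.
rewrite -(part_sum Y); apply: eq_bigr => y _.
transitivity (\sum_(x <- rv_vals X) \sum_(w | X w == x)
   (if Y w == y then P w * G (X w) (Y w) else 0)).
  apply: eq_bigr => x _; rewrite /pr_eq2 big_distrl /= big_mkcondr /=.
  apply: eq_bigr => w /eqP ->; by case: eqP => [->|].
by rewrite part_sum -big_mkcond.
Qed.

Lemma pr_ge (Omega : finType) (P : Omega -> R) (T : eqType) (X : Omega -> T) w :
  (forall w, 0 < P w) -> P w <= pr_eq P X (X w).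
Proof.
move=> Ppos; rewrite /pr_eq (bigD1 w) //= lerDl sumr_ge0 // => v _.
exact: ltW.
Qed.

Lemma pr2_ge (Omega : finType) (P : Omega -> R) (T U : eqType) (X : Omega -> T) (Y : Omega -> U) w :
  (forall w, 0 < P w) -> P w <= pr_eq2 P X Y (X w) (Y w).
Proof.
move=> Ppos; rewrite /pr_eq2 (bigD1 w) ?eqxx //= lerDl sumr_ge0 // => v _.
exact: ltW.
Qed.

Lemma pr_pos_vals (Omega : finType) (P : Omega -> R) (T : eqType) (X : Omega -> T) x :
  (forall w, 0 < P w) -> x \in rv_vals X -> 0 < pr_eq P X x.
Proof.
move=> Ppos /vals_ex [w <-]; exact: lt_le_trans (Ppos w) (pr_ge X w Ppos).
Qed.

Lemma cond_entropyE (Omega : finType) (P : Omega -> R) (T U : eqType) (X : Omega -> T) (Y : Omega -> U) :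
  (forall w, 0 < P w) ->
  cond_entropy P X Y = \sum_w P w * - log2 (pr_eq2 P X Y (X w) (Y w) / pr_eq P Y (Y w)).
Proof.
move=> Ppos; rewrite /cond_entropy -(sum_vals2 P X Y (fun x y => - log2 (pr_eq2 P X Y x y / pr_eq P Y y))).
apply: eq_big_seq => y yv; have py := pr_pos_vals Ppos yv.
rewrite -sumrN big_distrr /=; apply: eq_bigr => x _.
set L := log2 _; field; by rewrite gt_eqF.
Qed.

Lemma entropyE (Omega : finType) (P : Omega -> R) (T : eqType) (X : Omega -> T) :
  entropy P X = \sum_w P w * - log2 (pr_eq P X (X w)).
Proof.
rewrite /entropy RoppE -sumrN -(sum_vals1 P X (fun x => - log2 (pr_eq P X x))).
by apply: eq_bigr => x _; rewrite mulrN.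
Qed.

Definition q (k : nat) : R := ((k%:R * k.+1%:R)^-1).

Lemma q_ge0 k : 0 <= q k.
Proof. by rewrite /q invr_ge0 mulr_ge0 ?ler0n. Qed.

Lemma sum_q_nat N : \sum_(k <- iota 0 N.+1) q k = 1 - (N.+1%:R)^-1.
Proof.
elim: N => [|N IH]; first by rewrite big_cons big_nil /q mul0r invr0 invr1 subrr addr0.
have -> : iota 0 N.+2 = rcons (iota 0 N.+1) N.+1 by rewrite -cats1 -addn1 iotaD.
rewrite -cats1 big_cat IH big_seq1 /q.
have h1 : (N.+1%:R : R) != 0 by rewrite pnatr_eq0.
have h2 : (N.+2%:R : R) != 0 by rewrite pnatr_eq0.
have e : (N.+2%:R : R) = N.+1%:R + 1 by rewrite -addn1 natrD.
rewrite e in h2 *. move: h1 h2; set n := (N.+1%:R : R) => h1 h2.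
change (1 - n^-1 + (n * (n + 1))^-1 = 1 - (n + 1)^-1). field. have := ler0n R N. by move=> h; apply/andP; split; apply/negP => /eqP; lra.
Qed.

Lemma sum_q_le (s : seq nat) : uniq s -> \sum_(k <- s) q k <= 1.
Proof.
move=> us.
have [N hN] : exists N, forall k, k \in s -> (k < N.+1)%N.
  elim: s {us} => [|x s [N hN]]; first by exists 0.
  exists (maxn x N) => k; rewrite in_cons => /orP [/eqP ->|/hN h].
    by rewrite ltnS leq_maxl.
  by move: h; rewrite !ltnS leq_max => ->; rewrite orbT.
have hp : perm_eq [seq k <- iota 0 N.+1 | k \in s] s.
  apply: uniq_perm => //; first by rewrite filter_uniq // iota_uniq.
  move=> k; rewrite mem_filter mem_iota /= add0n.
  by case ks: (k \in s) => //=; rewrite hN.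
rewrite -(perm_big _ hp) big_filter.
apply: le_trans (_ : _ <= \sum_(k <- iota 0 N.+1) q k) _.
  rewrite [X in _ <= X](bigID (fun k => k \in s)) /= lerDl.
  by apply: sumr_ge0 => k _; exact: q_ge0.
rewrite sum_q_nat lerBlDr lerDl invr_ge0 ler0n //.
Qed.

Lemma sum_const_seqR (I : Type) (r : seq I) (p : pred I) (x : R) :
  \sum_(i <- r | p i) x = (count p r)%:R * x.
Proof.
elim: r => [|i r IH]; first by rewrite big_nil mul0r.
rewrite big_cons /= IH; case: (p i) => /=; last by rewrite add0n.
by rewrite natrD mulrDl mul1r.
Qed.

Section Rank.
Variables (Omega : finType) (P : Omega -> R) (A B : eqType) (alpha : Omega -> A) (beta : Omega -> B).
Hypothesis Ppos : forall w, 0 < P w.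

Definition p2 a b := pr_eq2 P alpha beta a b.
Definition vals := rv_vals alpha.
Definition Rb b a a' : bool :=
  (p2 a b < p2 a' b) || ((p2 a' b == p2 a b) && (index a' vals <= index a vals)%N).
Definition rk a b : nat := count (Rb b a) vals.

Lemma Rb_refl b a : Rb b a a.
Proof. by rewrite /Rb eqxx leqnn orbT. Qed.

Lemma Rb_trans b a a' a'' : Rb b a a' -> Rb b a' a'' -> Rb b a a''.
Proof.
rewrite /Rb => /orP[h1|/andP[/eqP e1 i1]] /orP[h2|/andP[/eqP e2 i2]].
- by rewrite (lt_trans h1 h2).
- by rewrite e2 h1.
- by rewrite -e1 h2.
- by rewrite e2 e1 eqxx (leq_trans i2 i1) orbT.
Qed.

Lemma Rb_anti b a a' : a \in vals -> a' \in vals -> Rb b a a' -> Rb b a' a -> a = a'.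
Proof.
rewrite /Rb => ha ha' /orP[h1|/andP[/eqP e1 i1]] /orP[h2|/andP[/eqP e2 i2]].
- by move: (lt_trans h1 h2); rewrite ltxx.
- by move: h1; rewrite e2 ltxx.
- by move: h2; rewrite e1 ltxx.
- have ei : index a vals = index a' vals by apply/eqP; rewrite eqn_leq i1 i2.
  by rewrite -[a](nth_index a ha) ei nth_index.
Qed.

Lemma Rb_total b a a' : Rb b a a' || Rb b a' a.
Proof.
rewrite /Rb; case: (ltgtP (p2 a b) (p2 a' b)) => //= h.
by rewrite leq_total.
Qed.

Lemma rk_lt b a a' : a \in vals -> a' \in vals -> a != a' -> Rb b a a' ->
  (rk a' b < rk a b)%N.
Proof.
move=> ha ha' ne H; rewrite /rk.
have e1 : count (Rb b a) vals = (count (Rb b a') (filter (Rb b a) vals)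
    + count (predC (Rb b a')) (filter (Rb b a) vals))%N by rewrite count_predC size_filter.
have e2 : count (Rb b a') (filter (Rb b a) vals) = count (Rb b a') vals.
  rewrite count_filter; apply: eq_count => x /=.
  by case h: (Rb b a' x) => //=; rewrite (Rb_trans H h).
have pos : (0 < count (predC (Rb b a')) (filter (Rb b a) vals))%N.
  rewrite -has_count; apply/hasP; exists a; first by rewrite mem_filter Rb_refl ha.
  apply/negP => h; by rewrite (Rb_anti ha ha' H h) eqxx in ne.
by rewrite e1 e2 -[ltnLHS]addn0 ltn_add2l.
Qed.

Lemma rk_inj b a a' : a \in vals -> a' \in vals -> rk a b = rk a' b -> a = a'.
Proof.
move=> ha ha' e; case: (eqVneq a a') => // ne.
case/orP: (Rb_total b a a') => h.
  by have := rk_lt ha ha' ne h; rewrite e ltnn.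
have ne' : a' != a by rewrite eq_sym.
by have := rk_lt ha' ha ne' h; rewrite e ltnn.
Qed.

Lemma rk_gt0 b a : a \in vals -> (0 < rk a b)%N.
Proof. by move=> ha; rewrite /rk -has_count; apply/hasP; exists a => //; exact: Rb_refl. Qed.

Lemma sum_p2 b : \sum_(a' <- vals) p2 a' b = pr_eq P beta b.
Proof.
rewrite /p2 /pr_eq2 /vals.
transitivity (\sum_(a' <- rv_vals alpha) \sum_(w | alpha w == a') (if beta w == b then P w else 0)).
  by apply: eq_bigr => a' _; rewrite big_mkcondr.
by rewrite part_sum -big_mkcond.
Qed.

Lemma p2_ge0 a b : 0 <= p2 a b.
Proof. by rewrite /p2 /pr_eq2 sumr_ge0 // => w _; exact: ltW. Qed.

Lemma rk_bound a b : (rk a b)%:R * p2 a b <= pr_eq P beta b.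
Proof.
rewrite -sum_p2 /rk -sum_const_seqR.
apply: le_trans (_ : _ <= \sum_(a' <- vals | Rb b a a') p2 a' b) _.
  apply: ler_sum => a' /orP[/ltW //|/andP[/eqP -> _]] //.
rewrite [X in _ <= X](bigID (Rb b a)) /= lerDl.
by apply: sumr_ge0 => x _; exact: p2_ge0.
Qed.

End Rank.

Lemma log2_rk_bound (Omega : finType) (P : Omega -> R) (A B : eqType) (alpha : Omega -> A) (beta : Omega -> B) w :
  (forall w, 0 < P w) ->
  log2 (rk P alpha beta (alpha w) (beta w))%:R <=
  - log2 (pr_eq2 P alpha beta (alpha w) (beta w) / pr_eq P beta (beta w)).
Proof.
move=> Ppos.
have p2pos : 0 < pr_eq2 P alpha beta (alpha w) (beta w) := lt_le_trans (Ppos w) (pr2_ge alpha beta w Ppos).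
have pbpos : 0 < pr_eq P beta (beta w) := lt_le_trans (Ppos w) (pr_ge beta w Ppos).
rewrite -log2V ?divr_gt0 // invf_div.
apply: log2_le; first by rewrite ltr0n rk_gt0 // mem_vals.
by rewrite ler_pdivlMr //; exact: rk_bound.
Qed.

Lemma mlog2q_le k : (0 < k)%N -> - log2 (q k) <= 2 * log2 k%:R + 1.
Proof.
move=> k0; have kp : (0 : R) < k%:R by rewrite ltr0n.
have k1p : (0 : R) < k.+1%:R by rewrite ltr0n.
rewrite /q log2V ?mulr_gt0 // opprK log2M //.
have : log2 k.+1%:R <= log2 (IZR 2 * k%:R).
  apply: log2_le => //; rewrite RmultE IZR2 -natrM ler_nat.
  by rewrite -addn1 mul2n -addnn leq_add2l.
rewrite log2M ?log2_2 //; last by rewrite IZR2 ltr0n.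
move=> h; lra.
Qed.

Theorem mainTheorem1 :
  exists C : R,
    forall (Omega : finType) (P : Omega -> R), is_fprob P ->
    forall (A B : eqType) (alpha : Omega -> A) (beta : Omega -> B),
    exists gamma : Omega -> nat,
      cond_entropy P alpha (rv_pair beta gamma) = 0 /\
      entropy P gamma <= 2 * cond_entropy P alpha beta + C.
Proof.
exists 1 => Omega P [Ppos Psum] A B alpha beta.
pose gamma w := rk P alpha beta (alpha w) (beta w).
exists gamma; split.
  rewrite /cond_entropy big1_seq // => y /andP[_ yv].
  rewrite big1_seq ?RoppE ?oppr0 ?mulr0 // => x /andP[_ xv].
  set c := pr_eq2 _ _ _ _ _; set d := pr_eq _ _ _.
  have [w0 /andP[/eqP ax /eqP py] | none] :=
    pickP (fun w => (alpha w == x) && (rv_pair beta gamma w == y)).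
    have -> : c = d.
      rewrite /c /d /pr_eq2 /pr_eq; apply: eq_bigl => w.
      case hw: (rv_pair beta gamma w == y); rewrite ?andbF ?andbT //.
      move/eqP: hw; rewrite -py /rv_pair /gamma => [[eb eg]].
      rewrite eb in eg; by rewrite -ax (rk_inj _ _ eg) ?eqxx // ?mem_vals.
    have [d0|dn0] := eqVneq d 0; first by rewrite d0 mul0r mul0r.
    by rewrite RdivE divff // log2_one mulr0.
  have -> : c = 0 by rewrite /c /pr_eq2 big_pred0.
  by rewrite mul0r mul0r.
set L := (ln (IZR 2))^-1.
have Lpos : 0 < L by rewrite invr_gt0 ln2_gt0.
set pg := pr_eq P gamma.
have pgpos w : 0 < pg (gamma w) := lt_le_trans (Ppos w) (pr_ge gamma w Ppos).
have gpos w : (0 < gamma w)%N by rewrite /gamma rk_gt0 // mem_vals.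
have qpos w : 0 < q (gamma w) by rewrite /q invr_gt0 mulr_gt0 // ltr0n ?gpos.
set e := fun w => - log2 (pr_eq2 P alpha beta (alpha w) (beta w) / pr_eq P beta (beta w)).
set cw := fun w => q (gamma w) / pg (gamma w).
have key w : - log2 (pg (gamma w)) <= 2 * e w + 1 + (cw w - 1) * L.
  have h1 := log2_le_sub1 (divr_gt0 (qpos w) (pgpos w)).
  rewrite ?RdivE (log2M (qpos w)) ?invr_gt0 // in h1.
  have {}h1 : log2 (q (gamma w)) + log2 ((pg (gamma w))^-1) <=
     (q (gamma w) * (pg (gamma w))^-1 - 1) / ln (IZR 2) := h1.
  rewrite (log2V (pgpos w)) in h1.
  have h2 := mlog2q_le (gpos w).
  have h3 : log2 (gamma w)%:R <= e w by exact: log2_rk_bound.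
  rewrite /cw; move: h1 h2 h3; rewrite /L; move: (ln (IZR 2)) => l.
  move=> h1 h2 h3. lra.
have S1 : \sum_w P w * cw w <= 1.
  rewrite /cw -(sum_vals1 P gamma (fun k => q k / pg k)).
  rewrite (eq_big_seq (fun k => q k)); first exact/sum_q_le/undup_uniq.
  move=> k kv; have := pr_pos_vals Ppos kv; rewrite -/pg => pk.
  rewrite mulrC -mulrA mulVf ?mulr1 //; by rewrite gt_eqF.
rewrite entropyE (cond_entropyE alpha beta Ppos).
apply: le_trans (_ : _ <= \sum_w P w * (2 * e w + 1 + (cw w - 1) * L)) _.
  by apply: ler_sum => w _; rewrite ler_pM2l.
have E : \sum_w P w * (2 * e w + 1 + (cw w - 1) * L) =
   2 * (\sum_w P w * e w) + (\sum_w P w) + ((\sum_w P w * cw w) - \sum_w P w) * L.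
  rewrite mulr_sumr -sumrB mulr_suml -!big_split /=; apply: eq_bigr => w _; ring.
rewrite E Psum.
have : ((\sum_w P w * cw w) - 1) * L <= 0 by rewrite pmulr_lle0 // subr_le0.
rewrite /e; lra.
Qed.
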